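(* Let $R=k[[t^6,t^7,t^{15}]]$ and $x=t^6+t^7$. Then $v(m^3+xR)\not\subseteq v(m^3)\cup v(xR)$; more precisely $22\in v(m^3+xR)$ but $22\notin v(m^3)\cup v(xR)$. Consequently the $m$-adic filtration of $R$ is not essentially divisible with respect to the minimal reduction $(t^6+t^7)R$, although it is essentially divisible with respect to $t^6R$.
   Context: $k$ is a field, $R=k[[t^6,t^7,t^{15}]]\subseteq k[[t]]$ with maximal ideal $m$, $v$ the $t$-adic valuation, and for a nonzero ideal $I$, $v(I)=\{v(a):a\in I,a\ne0\}$. For $a\in R$, $\operatorname{ord}(a)=\max\{i: a\in m^i\}$; for $s\in v(R)$, $\operatorname{vord}(s)=\max\{i: s\in v(m^i)\}$. For $x\in R$ with $v(x)=6$ (the multiplicity), the $m$-adic filtration is essentially divisible with respect to $xR$ if for every $u\in v(xR)$ there is $a\in xR$ with $v(a)=u$ and $\operatorname{ord}(a)=\operatorname{vord}(u)$. *)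

(* Defs.v *)
(* Formal power series over a field k are modelled as
   coefficient functions nat -> k. *)
From HB Require Import structures.
From mathcomp Require Import all_boot all_order all_algebra.
Set Implicit Arguments. Unset Strict Implicit. Unset Printing Implicit Defensive.
Import GRing.Theory.
Local Open Scope ring_scope.

Section PS.
Variable k : fieldType.

Definition ps := nat -> k.

Definition ps0 : ps := fun _ => 0.
Definition psadd (f g : ps) : ps := fun n => f n + g n.
Definition psmul (f g : ps) : ps :=
  fun n => \sum_(i < n.+1) f i * g (n - i)%N.
Definition tpow (e : nat) : ps := fun n => if n == e then 1 else 0.

(* v(a) = u : the t-adic valuation of a nonzero series a is u *)
Definition has_val (a : ps) (u : nat) : Prop :=
  a u != 0 /\ forall i, (i < u)%N -> a i = 0.

Definition inS (n : nat) : Prop := exists a b c : nat, n = (6 * a + 7 * b + 15 * c)%N.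

(* R = k[[t^6,t^7,t^15]] : series supported on <6,7,15> *)
Definition inR (f : ps) : Prop := forall n, f n != 0 -> inS n.
Definition inm (f : ps) : Prop := inR f /\ f 0%N = 0.

Inductive idealprod (I J : ps -> Prop) : ps -> Prop :=
| ip_zero : idealprod I J ps0
| ip_add b c s : I b -> J c -> idealprod I J s ->
                 idealprod I J (psadd (psmul b c) s).

Fixpoint mpow (i : nat) : ps -> Prop :=
  match i with
  | 0 => inR
  | i'.+1 => idealprod (mpow i') inm
  end.

Definition prin (x : ps) (a : ps) : Prop := exists c, inR c /\ a = psmul x c.

Definition idealsum (I J : ps -> Prop) (a : ps) : Prop :=
  exists b c, I b /\ J c /\ a = psadd b c.

Definition vset (I : ps -> Prop) (u : nat) : Prop :=
  exists a, I a /\ has_val a u.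

Definition is_max (P : nat -> Prop) (n : nat) : Prop :=
  P n /\ forall i, P i -> (i <= n)%N.

Definition is_ord (a : ps) (n : nat) : Prop := is_max (fun i => mpow i a) n.
Definition is_vord (s : nat) (n : nat) : Prop := is_max (fun i => vset (mpow i) s) n.

Definition ess_divisible (x : ps) : Prop :=
  forall u, vset (prin x) u ->
    exists a, prin x a /\ has_val a u /\
      exists n, is_ord a n /\ is_vord u n.

End PS.

(* Main.v *)
Require Import Defs.
From Stdlib Require Import Lia Classical FunctionalExtensionality.
From mathcomp Require Import all_boot all_order all_algebra.
Set Implicit Arguments. Unset Strict Implicit. Unset Printing Implicit Defensive.
Import GRing.Theory.

Ltac tolia := repeat match goal with H: is_true (_ <= _)%N |- _ => apply (elimT leP) in H | H : is_true (_ < _)%N |- _ => apply (elimT ltP) in H end; try (apply/leP || apply/ltP);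
 repeat match goal with H : context[addn] |- _ => rewrite -plusE in H | H : context[muln] |- _ => rewrite -multE in H | H : context[subn] |- _ => rewrite -minusE in H end;
 rewrite -?plusE -?multE -?minusE; lia.

Section Aux.
Variable k : fieldType.
Local Open Scope ring_scope.

Lemma L_add0 (f : ps k) : psadd f (ps0 k) = f.
Proof. apply: functional_extensionality => n; by rewrite /psadd /ps0 addr0. Qed.

Lemma L_tmul e (f : ps k) n :
  psmul (tpow k e) f n = if (e <= n)%N then f (n - e)%N else 0.
Proof.
rewrite /psmul /tpow.
case: (leqP e n) => Hen.
- have He : (e < n.+1)%N by [].
  rewrite (bigD1 (Ordinal He)) //= eqxx mul1r big1 ?addr0 // => i Hi.
  have -> : (nat_of_ord i == e) = false.
    apply/negbTE; apply: contra Hi => /eqP Hie; apply/eqP; apply: val_inj => /=; exact Hie.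
  by rewrite mul0r.
- rewrite big1 // => i _.
  have -> : (nat_of_ord i == e) = false.
    apply/negbTE/eqP => Hie; have := ltn_ord i; rewrite Hie; move=> H; tolia.
  by rewrite mul0r.
Qed.

Lemma L_addmul (f g h : ps k) n :
  psmul (psadd f g) h n = psmul f h n + psmul g h n.
Proof. rewrite /psmul /psadd -big_split /=; apply: eq_bigr => i _; by rewrite mulrDl. Qed.

Lemma L_tt e g : psmul (tpow k e) (tpow k g) = tpow k (e + g).
Proof.
apply: functional_extensionality => n; rewrite L_tmul /tpow.
case: (leqP e n) => H.
- case: eqP => H1; case: eqP => H2 //; exfalso; [apply H2|apply H1]; tolia.
- case: eqP => // H2; exfalso; tolia.
Qed.

Definition xx : ps k := psadd (tpow k 6) (tpow k 7).

Lemma L_x c n : psmul xx c n =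
  (if (6 <= n)%N then c (n - 6)%N else 0) + (if (7 <= n)%N then c (n - 7)%N else 0).
Proof. by rewrite /xx L_addmul !L_tmul. Qed.

Definition inG (i n : nat) : Prop :=
  exists a b c : nat, (i <= a + b + c)%N /\ n = (6 * a + 7 * b + 15 * c)%N.

Lemma sum_nz (n : nat) (F : 'I_n -> k) : \sum_(i < n) F i != 0 -> exists i, F i != 0.
Proof.
move=> Hs; case: (boolP [exists i, F i != 0]) => [/existsP [i Hi] | /existsPn H]; first by exists i.
move: Hs; rewrite big1 ?eqxx // => i _; by have := H i; rewrite negbK => /eqP.
Qed.

Lemma support i (a : ps k) : mpow i a -> forall n, a n != 0 -> inG i n.
Proof.
elim: i a => [|i IH] a /=.
- move=> Ha n /Ha [x [y [z ->]]]; exists x, y, z; split => //.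
- elim => [|b c s Hb Hc Hs IHs] n; first by rewrite /ps0 eqxx.
  rewrite /psadd.
  case: (boolP (s n != 0)) => [Hsn _ | /negPn /eqP ->]; first exact: IHs.
  rewrite addr0 /psmul => /sum_nz [j]; rewrite mulf_eq0 negb_or => /andP [Hbj Hcj].
  have [a1 [b1 [c1 [H1 E1]]]] := IH b Hb j Hbj.
  case: Hc => HcR Hc0.
  have [a2 [b2 [c2 E2]]] := HcR _ Hcj.
  have Hnz : (n - j)%N <> 0%N by move=> E; rewrite E Hc0 eqxx in Hcj.
  have Hj := ltn_ord j.
  exists (a1 + a2)%N, (b1 + b2)%N, (c1 + c2)%N; split; tolia.
Qed.

Lemma construct i a b c : (i <= a + b + c)%N -> mpow i (tpow k (6 * a + 7 * b + 15 * c)).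
Proof.
elim: i a b c => [|i IH] a b c H /=.
- move=> n; rewrite /tpow; case: ifP => [/eqP -> _|]; last by rewrite eqxx.
  by exists a, b, c.
- have Hinm : forall e, inS e -> e <> 0%N -> inm (tpow k e).
    move=> e He Hne; split; last by rewrite /tpow; case: ifP => // /eqP E; exfalso; apply: Hne.
    by move=> n; rewrite /tpow; case: ifP => [/eqP -> //|]; rewrite eqxx.
  have Hpr : forall e g, mpow i (tpow k e) -> inm (tpow k g) ->
      mpow i.+1 (tpow k (e + g)).
    move=> e g He Hg; rewrite -L_tt -(L_add0 (psmul _ _)); apply: ip_add => //; exact: ip_zero.
  case: a H => [|a] H.
  - case: b H => [|b] H.
    + case: c H => [|c] H; first by tolia.
      have -> : (6 * 0 + 7 * 0 + 15 * c.+1 = (6 * 0 + 7 * 0 + 15 * c) + 15)%N by tolia.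
      apply: Hpr; first by apply: IH; tolia.
      by apply: Hinm; [exists 0%N, 0%N, 1%N | ].
    + have -> : (6 * 0 + 7 * b.+1 + 15 * c = (6 * 0 + 7 * b + 15 * c) + 7)%N by tolia.
      apply: Hpr; first by apply: IH; tolia.
      by apply: Hinm; [exists 0%N, 1%N, 0%N | ].
  - have -> : (6 * a.+1 + 7 * b + 15 * c = (6 * a + 7 * b + 15 * c) + 6)%N by tolia.
    apply: Hpr; first by apply: IH; tolia.
    by apply: Hinm; [exists 1%N, 0%N, 0%N | ].
Qed.

Lemma has_val_t u : has_val (tpow k u) u.
Proof. split; first by rewrite /tpow eqxx oner_neq0. move=> i Hi; rewrite /tpow; case: ifP => // /eqP E; subst; by rewrite ltnn in Hi. Qed.

Lemma ex_max (P : nat -> Prop) B : P 0%N -> (forall i, P i -> (i <= B)%N) -> exists n, is_max P n.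
Proof.
move=> P0 HB.
suff: forall d j, (B - j <= d)%N -> P j -> exists n, is_max P n by move=> H; apply: (H B 0%N) => //; rewrite subn0.
elim => [|d IH] j Hd Pj.
- exists j; split => // i Pi; have := HB i Pi => ?; tolia.
- case: (classic (exists i, P i /\ (j < i)%N)) => [[i [Pi Hi]]|Hn].
  + apply: (IH i) => //; have := HB i Pi => ?; tolia.
  + exists j; split => // i Pi; case: (leqP i j) => // Hji; exfalso; apply: Hn; by exists i.
Qed.

Lemma max_iff (P Q : nat -> Prop) n : (forall i, P i <-> Q i) -> is_max P n -> is_max Q n.
Proof. move=> H [H1 H2]; split; first by apply/H. move=> i /H; exact: H2. Qed.

Lemma x_zero c u : (forall i, (i < u)%N -> psmul xx c i = 0) ->
  forall j, (j + 6 < u)%N -> c j = 0.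
Proof.
move=> H; elim/ltn_ind => j IH Hj.
have := H (j + 6)%N Hj; rewrite L_x.
have -> : (6 <= j + 6)%N by tolia.
have -> : (j + 6 - 6 = j)%N by tolia.
case: j IH Hj => [|j] IH Hj; first by rewrite /= addr0.
have -> : (7 <= j.+1 + 6)%N by tolia.
have -> : (j.+1 + 6 - 7 = j)%N by tolia.
rewrite (IH j) ?addr0 //; tolia.
Qed.


Lemma tpow_ne e n : e <> n -> tpow k e n = 0.
Proof. by move=> H; rewrite /tpow; case: ifP => // /eqP E; exfalso; apply: H. Qed.

Lemma inR_t e : inS e -> inR (tpow k e).
Proof. by move=> He n; rewrite /tpow; case: ifP => [/eqP -> //|]; rewrite eqxx. Qed.

Lemma inm_t e : inS e -> e <> 0%N -> inm (tpow k e).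
Proof. move=> He Hne; split; first exact: inR_t. by rewrite tpow_ne // => E; apply: Hne. Qed.

Lemma iff_G u i : inS u -> (mpow i (tpow k u) <-> inG i u) /\ (vset (@mpow k i) u <-> inG i u).
Proof.
move=> Hu.
have A : inG i u -> mpow i (tpow k u).
  by move=> [a [b [c [H ->]]]]; apply: construct.
have B : vset (@mpow k i) u -> inG i u.
  by move=> [a [Ha [Hnz _]]]; exact: support Ha _ Hnz.
split; split => //.
- move=> H; apply: B; exists (tpow k u); split => //; exact: has_val_t.
- move=> H; exists (tpow k u); split; [exact: A | exact: has_val_t].
Qed.
End Aux.

Theorem mainTheorem10 (k : fieldType) :
  let x := psadd (tpow k 6) (tpow k 7) in
  let I := idealsum (@mpow k 3) (prin x) in
  (~ (forall u, vset I u -> vset (@mpow k 3) u \/ vset (prin x) u)) /\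
  vset I 22 /\ ~ vset (@mpow k 3) 22 /\ ~ vset (prin x) 22 /\
  ~ ess_divisible x /\ ess_divisible (tpow k 6).
Proof.
move=> x I.
have P3 : ~ vset (@mpow k 3) 22.
  move=> [a [Ha [Hnz _]]]; have [a1 [b1 [c1 [H1 E]]]] := support Ha Hnz; tolia.
have P4 : ~ vset (prin x) 22.
  move=> [a [[c [Hc ->]] [Hnz Hz]]].
  have Hc15 := x_zero Hz (j:=15) isT.
  rewrite (L_x c 22) /= Hc15 addr0 in Hnz.
  have [a' [b' [c' E]]] := Hc _ Hnz; tolia.
have P2 : vset I 22.
  pose neg7 : ps k := fun n => if n == 7%N then (-1)%R else 0%R.
  pose b3 := psadd (psmul (psadd (psmul (psadd (psmul (tpow k 0) (tpow k 7)) (ps0 k)) (tpow k 7)) (ps0 k)) neg7) (ps0 k).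
  have S7 : inS 7 by exists 0%N, 1%N, 0%N.
  exists (psadd b3 (psmul x (tpow k 15))); split.
    exists b3, (psmul x (tpow k 15)); split; last split => //.
      apply: ip_add; last exact: ip_zero.
        apply: ip_add; last exact: ip_zero.
          apply: ip_add; last exact: ip_zero.
            by apply: inR_t; exists 0%N, 0%N, 0%N.
          exact: inm_t.
        exact: inm_t.
      split; last by [].
      by move=> n; rewrite /neg7; case: ifP => [/eqP -> //|]; rewrite eqxx.
    exists (tpow k 15); split => //; apply: inR_t; by exists 0%N, 0%N, 1%N.
  have Hv : forall n, psadd b3 (psmul x (tpow k 15)) n =
     ((if (14 <= n)%N then neg7 (n - 14)%N else 0) +
     ((if (6 <= n)%N then tpow k 15 (n - 6)%N else 0) + (if (7 <= n)%N then tpow k 15 (n - 7)%N else 0)))%R.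
    by move=> n; rewrite /psadd /b3 !L_add0 !L_tt L_tmul -(L_x (tpow k 15) n).
  split.
    by rewrite Hv /= /neg7 /tpow /= !add0r oner_neq0.
  move=> i Hi; rewrite Hv.
  do 22 (case: i Hi => [|i] Hi; first by rewrite /neg7 /tpow /= ?addr0 ?add0r ?addNr).
  by [].
split.
  move=> H; by case: (H 22%N P2).
split => //; split => //; split => //.
split.
  move=> H.
  have S22 : inS 22 by exists 0%N, 1%N, 1%N.
  have V28 : vset (prin x) 28.
    exists (psmul x (tpow k 22)); split; first by exists (tpow k 22); split => //; exact: inR_t.
    split.
      by rewrite (L_x (tpow k 22) 28) /= /tpow /= addr0 oner_neq0.
    move=> i Hi; rewrite (L_x (tpow k 22) i) !tpow_ne; first by case: ifP => _; case: ifP => _; rewrite ?addr0.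
    1,2: move=> E; tolia.
  have [a [[c [Hc Ea]] [[Hnz Hz] [n [[Hon Hmax] [[Hvn _] Hvmax]]]]]] := H 28%N V28.
  have H4 : (4 <= n)%N.
    apply: Hvmax; exists (tpow k 28); split; last exact: has_val_t.
    exact: (@construct k 4 0 4 0 isT).
  subst a.
  have Hc21 := x_zero Hz (j:=21) isT.
  have Hc23 : c 23%N = 0%R.
    case: (boolP (c 23%N == 0%R)) => [/eqP //|/Hc [a' [b' [c' E]]]]; exfalso; tolia.
  rewrite (L_x c 28) /= Hc21 addr0 in Hnz.
  have H29 : psmul x c 29 != 0%R by rewrite (L_x c 29) /= Hc23 add0r.
  have [a' [b' [c' [E1 E2]]]] := support Hon H29; tolia.
move=> u [a [[c [Hc ->]] [Hnz Hz]]].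
rewrite L_tmul in Hnz.
case: (leqP 6 u) => H6; last by rewrite leqNgt H6 eqxx in Hnz.
rewrite H6 in Hnz.
have [a1 [b1 [c1 E]]] := Hc _ Hnz.
have Su : inS u by exists a1.+1, b1, c1; tolia.
exists (tpow k u); split.
  exists (tpow k (u - 6)); split; first by apply: inR_t; exists a1, b1, c1.
  rewrite L_tt; congr tpow; tolia.
split; first exact: has_val_t.
have [n Hn] : exists n, is_max (fun i => inG i u) n.
  apply: (ex_max (B := u)); first by exists a1.+1, b1, c1; split => //; tolia.
  move=> i [a2 [b2 [c2 [H1 H2]]]]; tolia.
exists n; split; apply: max_iff Hn => i; have [A B] := @iff_G k u i Su; [exact: iff_sym A | exact: iff_sym B].
Qed.
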